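(* Let $G$ be a group and $k\in\mathbb{N}$, and suppose $[\overline{G}_k:\overline{G}_{k+1}]<\infty$. Then $\bigcap_{i=1}^\infty\overline{G}_i=\overline{G}_k$.
   Context: The lower central series is $G_1=G$, $G_{i+1}=[G,G_i]$, where $[x,y]=x^{-1}y^{-1}xy$ and $[A,B]=\langle[a,b]:a\in A,b\in B\rangle$. The generalised commutator subgroups are $\overline{G}_k=\{g\in G:\exists n\in\mathbb{N},\ g^n\in G_k\}$ (these are subgroups, decreasing in $k$). *)

(* Defs.v *)
From Stdlib Require Import List Arith.

Record Group := {
  carrier :> Type;
  gmul : carrier -> carrier -> carrier;
  gone : carrier;
  ginv : carrier -> carrier;
  gmul_assoc : forall x y z, gmul x (gmul y z) = gmul (gmul x y) z;
  gmul_1l : forall x, gmul gone x = x;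
  gmul_Vl : forall x, gmul (ginv x) x = gone
}.

Arguments gmul {g}.
Arguments gone {g}.
Arguments ginv {g}.

Definition comm {G : Group} (x y : G) : G :=
  gmul (ginv x) (gmul (ginv y) (gmul x y)).

Fixpoint gpow {G : Group} (g : G) (n : nat) : G :=
  match n with 0 => gone | S m => gmul g (gpow g m) end.

Inductive gen {G : Group} (S : G -> Prop) : G -> Prop :=
| gen_base : forall x, S x -> gen S x
| gen_one : gen S gone
| gen_mul : forall x y, gen S x -> gen S y -> gen S (gmul x y)
| gen_inv : forall x, gen S x -> gen S (ginv x).

Definition commsub {G : Group} (A B : G -> Prop) : G -> Prop :=
  gen (fun g => exists a b, A a /\ B b /\ g = comm a b).

(* Lower central series, indexed from 1: lcs 1 = G, lcs (i+1) = [G, lcs i].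
   (lcs 0 is also set to G, a harmless convention; only i >= 1 is used.) *)
Fixpoint lcs (G : Group) (n : nat) : G -> Prop :=
  match n with
  | 0 => fun _ => True
  | 1 => fun _ => True
  | S m => commsub (fun _ => True) (lcs G m)
  end.

Definition glcs (G : Group) (k : nat) : G -> Prop :=
  fun g => exists n, 1 <= n /\ lcs G k (gpow g n).

(* For B <= A, [A : B] < oo: A is covered by finitely many left cosets
   x B with x in A. *)
Definition finite_index {G : Group} (A B : G -> Prop) : Prop :=
  exists l : list G, (forall x, In x l -> A x) /\
    forall a, A a -> exists x, In x l /\ B (gmul (ginv x) a).

(* Main.v *)
Require Import Defs.
From Stdlib Require Import List Arith Lia Classical.

Section GrpAlg.
Context {G : Group}.
Implicit Types x y z : G.

Lemma assoc_r x y z : gmul (gmul x y) z = gmul x (gmul y z).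
Proof. symmetry; apply gmul_assoc. Qed.
Lemma m1l x : gmul gone x = x. Proof. apply gmul_1l. Qed.
Lemma mVl x : gmul (ginv x) x = gone. Proof. apply gmul_Vl. Qed.
Lemma cancel_l x z : gmul (ginv x) (gmul x z) = z.
Proof. rewrite gmul_assoc, mVl, m1l; reflexivity. Qed.
Lemma mVr x : gmul x (ginv x) = gone.
Proof.
  rewrite <- (m1l (gmul x (ginv x))).
  rewrite <- (mVl (ginv x)) at 1.
  rewrite <- gmul_assoc, (gmul_assoc _ (ginv x) x), mVl, m1l, mVl. reflexivity.
Qed.
Lemma m1r x : gmul x gone = x.
Proof. rewrite <- (mVl x), gmul_assoc, mVr, m1l; reflexivity. Qed.
Lemma cancel_r x z : gmul x (gmul (ginv x) z) = z.
Proof. rewrite gmul_assoc, mVr, m1l; reflexivity. Qed.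
Lemma inv_uniq x y : gmul x y = gone -> ginv x = y.
Proof. intro H. rewrite <- (m1r (ginv x)), <- H, cancel_l. reflexivity. Qed.
Lemma inv_inv x : ginv (ginv x) = x.
Proof. apply inv_uniq, mVl. Qed.
Lemma inv_one : ginv (@gone G) = gone.
Proof. apply inv_uniq, m1l. Qed.
Lemma inv_mul x y : ginv (gmul x y) = gmul (ginv y) (ginv x).
Proof. apply inv_uniq. rewrite assoc_r, cancel_r, mVr. reflexivity. Qed.
End GrpAlg.

Create HintDb grp.
#[export] Hint Rewrite @assoc_r @m1l @m1r @mVl @mVr @cancel_l @cancel_r @inv_inv @inv_one @inv_mul : grp.
Ltac gsimpl := unfold comm; autorewrite with grp; try reflexivity; try (let HH := fresh in intro HH; exact HH).

Section Pow.
Context {G : Group}.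
Lemma gpow_add (g : G) a b : gpow g (a + b) = gmul (gpow g a) (gpow g b).
Proof. induction a; simpl. - gsimpl. - rewrite IHa; gsimpl. Qed.
Lemma gpow_mul (g : G) a b : gpow (gpow g a) b = gpow g (a * b).
Proof.
  induction b; simpl. - rewrite Nat.mul_0_r; reflexivity.
  - rewrite IHb, Nat.mul_succ_r, Nat.add_comm, gpow_add; reflexivity.
Qed.
Lemma gpow_comm (g : G) n : gmul g (gpow g n) = gmul (gpow g n) g.
Proof.
  change (gmul g (gpow g n)) with (gpow g (1 + n)).
  rewrite Nat.add_comm, gpow_add. simpl. gsimpl.
Qed.
Lemma gpow_inv (g : G) n : gpow (ginv g) n = ginv (gpow g n).
Proof.
  induction n; simpl. - gsimpl.
  - rewrite IHn, gpow_comm. gsimpl.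
Qed.
Lemma gpow_1 (g : G) : gpow g 1 = g.
Proof. simpl. gsimpl. Qed.
End Pow.

Record nsub {G : Group} (N : G -> Prop) : Prop := {
  n1 : N gone;
  nmul : forall x y, N x -> N y -> N (gmul x y);
  ninv : forall x, N x -> N (ginv x);
  nconj : forall x h, N h -> N (gmul (ginv x) (gmul h x))
}.

Lemma npow {G : Group} (N : G -> Prop) (HN : nsub N) x n : N x -> N (gpow x n).
Proof. intro H; induction n; simpl. apply (n1 _ HN). apply (nmul _ HN); auto. Qed.

Lemma lcs_SS (G : Group) m : lcs G (S (S m)) = commsub (fun _ => True) (lcs G (S m)).
Proof. reflexivity. Qed.

Lemma lcs_nsub (G : Group) m : nsub (lcs G m).
Proof.
  induction m as [|m IH].
  - constructor; simpl; auto.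
  - destruct m as [|m].
    + constructor; simpl; auto.
    + rewrite lcs_SS. unfold commsub. constructor.
      * apply gen_one.
      * intros; apply gen_mul; auto.
      * intros; apply gen_inv; auto.
      * intros x h H. induction H.
        -- apply gen_base. destruct H as [a [b [_ [Hb ->]]]].
           exists (gmul (ginv x) (gmul a x)), (gmul (ginv x) (gmul b x)).
           split; [exact I|split; [apply (nconj _ IH); auto|]]. gsimpl.
        -- replace (gmul (ginv x) (gmul gone x)) with (@gone G) by (gsimpl). apply gen_one.
        -- replace (gmul (ginv x) (gmul (gmul x0 y) x)) with
             (gmul (gmul (ginv x) (gmul x0 x)) (gmul (ginv x) (gmul y x))) by gsimpl.
           apply gen_mul; auto.
        -- replace (gmul (ginv x) (gmul (ginv x0) x)) with
             (ginv (gmul (ginv x) (gmul x0 x))) by gsimpl.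
           apply gen_inv; auto.
Qed.

Lemma lcs_dec (G : Group) m x : lcs G (S m) x -> lcs G m x.
Proof.
  destruct m as [|m]. { intros; exact I. }
  rewrite lcs_SS. intro H. induction H.
  - destruct H as [a [b [_ [Hb ->]]]].
    pose proof (lcs_nsub G (S m)) as HN.
    replace (comm a b) with (gmul (gmul (ginv a) (gmul (ginv b) a)) b) by gsimpl.
    apply (nmul _ HN); auto. apply (nconj _ HN), (ninv _ HN); auto.
  - apply (n1 _ (lcs_nsub G (S m))).
  - apply (nmul _ (lcs_nsub G (S m))); auto.
  - apply (ninv _ (lcs_nsub G (S m))); auto.
Qed.

Lemma lcs_le (G : Group) i j x : i <= j -> lcs G j x -> lcs G i x.
Proof. induction 1; auto. intro H'. apply IHle, lcs_dec; auto. Qed.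

Section Rel.
Context {G : Group} (N : G -> Prop) (HN : nsub N).
Definition rel (x y : G) := N (gmul (ginv x) y).
Definition centr (c : G) := forall y, N (comm y c).

Lemma rel_refl x : rel x x.
Proof. unfold rel; rewrite mVl; apply (n1 _ HN). Qed.
Lemma rel_eq x y : x = y -> rel x y.
Proof. intros ->; apply rel_refl. Qed.
Lemma rel_sym x y : rel x y -> rel y x.
Proof. unfold rel; intro H. apply (ninv _ HN) in H. revert H. gsimpl. Qed.
Lemma rel_trans x y z : rel x y -> rel y z -> rel x z.
Proof.
  unfold rel; intros H1 H2. pose proof (nmul _ HN _ _ H1 H2) as H. revert H. gsimpl.
Qed.
Lemma rel_mul x y x' y' : rel x y -> rel x' y' -> rel (gmul x x') (gmul y y').
Proof.
  unfold rel; intros H1 H2.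
  pose proof (nmul _ HN _ _ (nconj _ HN x' _ H1) H2) as H. revert H. gsimpl.
Qed.
Lemma rel_N x y : rel x y -> N x -> N y.
Proof.
  unfold rel; intros H1 H2. pose proof (nmul _ HN _ _ H2 H1) as H. revert H. gsimpl.
Qed.
Lemma rel_N' x y : rel x y -> N y -> N x.
Proof. intro H; apply rel_N, rel_sym, H. Qed.
Lemma centr_rel c y : centr c -> rel (gmul c y) (gmul y c).
Proof. intro H. unfold rel. pose proof (H y) as Hy. revert Hy. gsimpl. Qed.

Lemma centr_pow c : centr c -> forall n u, rel (gpow (gmul u c) n) (gmul (gpow u n) (gpow c n)).
Proof.
  intros Hc n u. induction n; simpl.
  - apply rel_eq. gsimpl.
  - eapply rel_trans. apply rel_mul. apply rel_refl. apply IHn.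
    replace (gmul (gmul u c) (gmul (gpow u n) (gpow c n)))
      with (gmul u (gmul (gmul c (gpow u n)) (gpow c n))) by gsimpl.
    replace (gmul (gmul u (gpow u n)) (gmul c (gpow c n)))
      with (gmul u (gmul (gmul (gpow u n) c) (gpow c n))) by gsimpl.
    apply rel_mul. apply rel_refl. apply rel_mul. apply centr_rel; auto. apply rel_refl.
Qed.

Lemma centr_conj c t : centr t -> rel (gmul (ginv c) (gmul t c)) t.
Proof.
  intro Ht. eapply rel_trans. apply rel_mul. apply rel_refl. apply centr_rel, Ht.
  apply rel_eq. gsimpl.
Qed.

Lemma prod_torsion u c p q : centr c -> 1 <= p -> 1 <= q ->
  N (gpow u p) -> N (gpow (gmul u c) q) -> N (gpow c (p * q)).
Proof.
  intros Hc Hp Hq H1 H2.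
  pose proof (centr_pow c Hc (p * q) u) as R.
  assert (A : N (gpow (gmul u c) (p * q))).
  { rewrite Nat.mul_comm, <- gpow_mul. apply npow; auto. }
  assert (B : N (gpow u (p * q))).
  { rewrite <- gpow_mul. apply npow; auto. }
  pose proof (rel_N _ _ R A) as C.
  pose proof (nmul _ HN _ _ (ninv _ HN _ B) C) as D. revert D. gsimpl.
Qed.
End Rel.

Lemma pigeon m : forall (P : nat -> nat -> Prop),
  (forall i, i <= m -> exists j, j < m /\ P i j) ->
  exists i1 i2 j, i1 < i2 <= m /\ P i1 j /\ P i2 j.
Proof.
  induction m as [|m IH]; intros P H.
  - destruct (H 0 (le_n 0)) as [j [Hj _]]; lia.
  - destruct (H (S m) (le_n _)) as [j0 [Hj0 P0]].
    destruct (classic (exists i, i <= m /\ P i j0)) as [[i [Hi Pi]]|Hno].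
    + exists i, (S m), j0. repeat split; auto; lia.
    + set (P' := fun i j => j < m /\ (P i j \/ (j = j0 /\ P i m))).
      destruct (IH P') as [i1 [i2 [j [Hi [[_ A1] [_ A2]]]]]].
      * intros i Hi. destruct (H i ltac:(lia)) as [j [Hj Pj]].
        destruct (Nat.eq_dec j m) as [->|Hjm].
        -- exists j0. assert (j0 <> m).
           { intro E. subst j0. apply Hno. eauto. }
           unfold P'; split; [lia|]. split; [lia|]. right; auto.
        -- exists j. unfold P'; split; [lia|]. split; [lia|]. left; auto.
      * destruct A1 as [A1|[E1 A1]]; destruct A2 as [A2|[E2 A2]].
        -- exists i1, i2, j; repeat split; auto; lia.
        -- exfalso; apply Hno; exists i1; split; [lia|]. subst; auto.
        -- exfalso; apply Hno; exists i2; split; [lia|]. subst; auto.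
        -- exists i1, i2, m; repeat split; auto; lia.
Qed.

Lemma centr_lcs (G : Group) j c : 1 <= j -> lcs G j c -> centr (lcs G (S j)) c.
Proof.
  intros Hj Hc y. destruct j as [|j]; [lia|]. rewrite lcs_SS.
  apply gen_base. exists y, c. auto.
Qed.

Lemma step1 (G : Group) (k : nat) (hk : 1 <= k)
  (hfin : finite_index (glcs G k) (glcs G (S k))) :
  forall g, lcs G k g -> exists n, 1 <= n /\ lcs G (S k) (gpow g n).
Proof.
  intros g Hg. destruct hfin as [l [_ Hl]].
  pose proof (lcs_nsub G k) as HK. pose proof (lcs_nsub G (S k)) as HN.
  destruct (pigeon (length l) (fun i j => glcs G (S k) (gmul (ginv (nth j l gone)) (gpow g (S i)))))
    as [i1 [i2 [j [Hi [A1 A2]]]]].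
  { intros i _. destruct (Hl (gpow g (S i))) as [x [Hx Bx]].
    - exists 1. split; auto. rewrite gpow_1. apply npow; auto.
    - destruct (In_nth l x gone Hx) as [j [Hj E]]. exists j; split; auto. rewrite E; auto. }
  set (x := nth j l gone) in *.
  set (u := gmul (ginv x) (gpow g (S i1))) in *.
  set (c := gpow g (i2 - i1)).
  assert (E : gmul (ginv x) (gpow g (S i2)) = gmul u c).
  { unfold u, c. replace (S i2) with (S i1 + (i2 - i1)) by lia. rewrite gpow_add. gsimpl. }
  rewrite E in A2.
  destruct A1 as [p [Hp Up]]. destruct A2 as [q [Hq Vq]].
  assert (Hc : centr (lcs G (S k)) c). { apply centr_lcs; auto. apply npow; auto. }
  pose proof (prod_torsion _ HN u c p q Hc Hp Hq Up Vq) as R.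
  unfold c in R. rewrite gpow_mul in R.
  exists ((i2 - i1) * (p * q)). split; auto.
  apply Nat.le_trans with (1 * 1); [lia|]. apply Nat.mul_le_mono; [lia|]. lia.
Qed.

Lemma step2 (G : Group) (j : nat) (hj : 1 <= j) :
  (forall h, lcs G j h -> exists n, 1 <= n /\ lcs G (S j) (gpow h n)) ->
  (forall h, lcs G (S j) h -> exists n, 1 <= n /\ lcs G (S (S j)) (gpow h n)).
Proof.
  intros IH h Hh.
  pose proof (lcs_nsub G (S (S j))) as HM.
  set (M := lcs G (S (S j))) in *.
  assert (Hgen : lcs G (S j) h) by exact Hh.
  destruct j as [|j']; [lia|].
  rewrite lcs_SS in Hh. induction Hh as [t Ht| |x y Hx IHx Hy IHy|x Hx IHx].
  - destruct Ht as [a [b [_ [Hb ->]]]].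
    destruct (IH b Hb) as [n [Hn Bn]].
    exists n; split; auto.
    assert (Ct : centr M (comm a b)) by (apply centr_lcs; auto; lia).
    assert (R : forall m, lcs G (S j') (gpow b m) -> rel M (gpow (comm a b) m) (comm a (gpow b m))).
    { induction m; intro Hbm; simpl.
      - apply (rel_eq _ HM). gsimpl.
      - assert (Hbm' : lcs G (S j') (gpow b m)) by (apply npow; auto; apply lcs_nsub).
        apply (rel_trans _ HM _ (gmul (comm a b) (comm a (gpow b m)))).
        apply (rel_mul _ HM). apply (rel_refl _ HM). apply IHm, Hbm'.
        apply (rel_trans _ HM _ (gmul (comm a (gpow b m)) (comm a b))).
        apply centr_rel, Ct.
        apply (rel_trans _ HM _ (gmul (comm a (gpow b m)) (gmul (ginv (gpow b m)) (gmul (comm a b) (gpow b m))))).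
        apply (rel_mul _ HM). apply (rel_refl _ HM).
        apply (rel_sym _ HM). apply (centr_conj _ HM (gpow b m)), Ct.
        apply (rel_eq _ HM). gsimpl. }
    apply (rel_N' _ HM _ _ (R n ltac:(apply npow; auto; apply lcs_nsub))).
    unfold M. rewrite lcs_SS. apply gen_base. exists a, (gpow b n). auto.
  - exists 1; split; auto. rewrite gpow_1. apply (n1 _ HM).
  - assert (Hx' : lcs G (S (S j')) x) by exact Hx.
    assert (Hy' : lcs G (S (S j')) y) by exact Hy.
    destruct (IHx Hx') as [p [Hp Px]]. destruct (IHy Hy') as [q [Hq Qy]].
    exists (p * q). split; [nia|].
    assert (Cy : centr M y) by (apply centr_lcs; auto; lia).
    apply (rel_N' _ HM _ _ (centr_pow _ HM y Cy (p*q) x)).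
    apply (nmul _ HM).
    + rewrite <- gpow_mul. apply npow; auto.
    + rewrite Nat.mul_comm, <- gpow_mul. apply npow; auto.
  - assert (Hx' : lcs G (S (S j')) x) by exact Hx.
    destruct (IHx Hx') as [p [Hp Px]]. exists p; split; auto.
    rewrite gpow_inv. apply (ninv _ HM); auto.
Qed.

Theorem lemma5p7 (G : Group) (k : nat) (hk : 1 <= k)
  (hfin : finite_index (glcs G k) (glcs G (S k))) :
  forall g : G, (forall i, 1 <= i -> glcs G i g) <-> glcs G k g.
Proof.
  intro g. split.
  - intro H; apply H, hk.
  - intros [n [Hn Hg]] i Hi.
    assert (Cl : forall d h, lcs G (k + d) h -> exists m, 1 <= m /\ lcs G (S (k + d)) (gpow h m)).
    { induction d.
      - rewrite Nat.add_0_r. apply step1; auto.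
      - rewrite Nat.add_succ_r. apply step2; [lia|]. apply IHd. }
    destruct (le_lt_dec i k) as [Hik|Hik].
    + exists n; split; auto. apply (lcs_le G i k); auto.
    + assert (forall d, glcs G (k + d) g).
      { induction d.
        - rewrite Nat.add_0_r. exists n; auto.
        - destruct IHd as [m [Hm Hgm]]. destruct (Cl d _ Hgm) as [m' [Hm' H']].
          rewrite gpow_mul in H'. rewrite Nat.add_succ_r. exists (m * m'). split; [nia|auto]. }
      replace i with (k + (i - k)) by lia. auto.
Qed.
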